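(* Let $A,B \in\mathbb{R}^{m\times n}$ and $b\in\mathbb{R}^m$ with $\operatorname{rank}(B) = m$ and $m<n$. If $B^\dagger b < 0$ and $\|B^\dagger A\|_\infty < \gamma/2$, where $\gamma = \dfrac{\min_i|(B^\dagger b)_i|}{\max_i|(B^\dagger b)_i|}$, then for every sign pattern $s\in\{1,-1\}^n$ the equation $Ax-B|x|=b$ has infinitely many solutions with sign pattern $s$.
   Context: $B^\dagger$ is the Moore–Penrose inverse; $|x|$ is the entrywise absolute value; vector inequalities are entrywise; $\|\cdot\|_\infty$ on matrices is the operator norm induced by the vector $\infty$-norm. A vector $x$ has sign pattern $s$ if $\operatorname{sign}(x_{(i)})=s_{(i)}$ for all $i$. *)

(* Defs.v *)
From HB Require Import structures.
From mathcomp Require Import all_boot all_order all_algebra.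
From mathcomp Require Import all_classical all_reals.
Set Implicit Arguments. Unset Strict Implicit. Unset Printing Implicit Defensive.
Import Order.TTheory GRing.Theory Num.Theory.
Local Open Scope ring_scope.

(* Moore–Penrose inverse over the reals: X is the MP inverse of M iff it
   satisfies the four Penrose conditions (conjugate transpose = transpose). *)
Definition is_MP_inverse {R : realType} {m n : nat}
  (M : 'M[R]_(m, n)) (X : 'M[R]_(n, m)) : Prop :=
  [/\ M *m X *m M = M,
      X *m M *m X = X,
      (M *m X)^T = M *m X
    & (X *m M)^T = X *m M].

Definition mx_abs {R : realType} {m n : nat} (M : 'M[R]_(m, n)) : 'M[R]_(m, n) :=
  map_mx (fun x => `|x|) M.

(* operator norm induced by the vector infinity-norm: max absolute row sum *)
Definition mx_norm_inf {R : realType} {m n : nat} (M : 'M[R]_(m, n)) : R :=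
  \big[Num.max/0]_(i < m) \sum_(j < n) `|M i j|.

Definition vmax_abs {R : realType} {n : nat} (v : 'cV[R]_n) : R :=
  \big[Num.max/0]_(i < n) `|v i 0|.
Definition vmin_abs {R : realType} {n : nat} (v : 'cV[R]_n) : R :=
  \big[Num.min/vmax_abs v]_(i < n) `|v i 0|.

Definition has_sign_pattern {R : realType} {n : nat} (x s : 'cV[R]_n) : Prop :=
  forall i, Num.sg (x i 0) = s i 0.

(* Main.v *)
Require Import Defs.
From HB Require Import structures.
From mathcomp Require Import all_boot all_order all_algebra.
From mathcomp Require Import all_classical all_reals.
From mathcomp Require Import ring lra zify.
Import Order.TTheory GRing.Theory Num.Theory.
Local Open Scope ring_scope.

Section Helpers.
Variable R : realType.
Local Set Implicit Arguments. Local Unset Strict Implicit.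

Definition vn {n} (z : 'cV[R]_n) := vmax_abs z.

Lemma vn_ge0 n (z : 'cV[R]_n) : 0 <= vn z.
Proof. rewrite /vn /vmax_abs; apply: (big_ind (fun x => 0 <= x)) => //.
by move=> x y hx hy; rewrite le_max hx. Qed.

Lemma vn_ge n (z : 'cV[R]_n) i : `|z i 0| <= vn z.
Proof. by rewrite /vn /vmax_abs (bigD1 i) //= le_max lexx. Qed.

Lemma vn_le n (z : 'cV[R]_n) a : 0 <= a -> (forall i, `|z i 0| <= a) -> vn z <= a.
Proof. move=> a0 h; rewrite /vn /vmax_abs; apply: (big_ind (fun x => x <= a)) => //.
by move=> x y hx hy; rewrite ge_max hx. Qed.

Lemma vmin_le n (z : 'cV[R]_n) i : vmin_abs z <= `|z i 0|.
Proof. by rewrite /vmin_abs (bigD1 i) //= ge_min lexx. Qed.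

Lemma vmin_gt0 n (z : 'cV[R]_n) (i0 : 'I_n) : (forall i, 0 < `|z i 0|) -> 0 < vmin_abs z.
Proof. move=> h; rewrite /vmin_abs; apply: (big_ind (fun x => 0 < x)) => //.
  by apply: (lt_le_trans (h i0)); apply: vn_ge.
by move=> x y hx hy; rewrite lt_min hx. Qed.

Lemma vn_eq0 n (z : 'cV[R]_n) : vn z = 0 -> z = 0.
Proof. move=> h; apply/matrixP => i j; rewrite (ord1 j) mxE.
by apply/normr0_eq0/le_anti; rewrite normr_ge0 -h vn_ge. Qed.

End Helpers.

Local Open Scope classical_set_scope.

Theorem corollary3p3 (R : realType) (m n : nat)
  (A B : 'M[R]_(m, n)) (b : 'cV[R]_m) (Bp : 'M[R]_(n, m)) :
  is_MP_inverse B Bp ->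
  \rank B = m ->
  (m < n)%N ->
  (forall i, (Bp *m b) i 0 < 0) ->
  mx_norm_inf (Bp *m A) < (vmin_abs (Bp *m b) / vmax_abs (Bp *m b)) / 2 ->
  forall s : 'cV[R]_n, (forall i, s i 0 = 1 \/ s i 0 = -1) ->
    infinite_set [set x : 'cV[R]_n |
                   A *m x - B *m mx_abs x = b /\ has_sign_pattern x s].
Proof.
move=> [MP1 MP2 MP3 MP4] rkB mn cneg Hnorm s Hs.
set S := [set x | _].
set c := Bp *m b in cneg Hnorm.
set W := Bp *m A in Hnorm.
set N := mx_norm_inf W in Hnorm.
set mu := vmin_abs c in Hnorm.
set Mx := vmax_abs c in Hnorm.
have n0 : (0 < n)%N by apply: leq_ltn_trans mn.
pose i0 : 'I_n := Ordinal n0.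
have cpos : forall i, 0 < `|c i 0|.
  by move=> i; rewrite normr_gt0 (lt_eqF (cneg i)).
have mu0 : 0 < mu by apply: (vmin_gt0 i0).
have Mx0 : 0 < Mx by apply: (lt_le_trans (cpos i0)); apply: (vn_ge c i0).
have muMx : mu <= Mx by apply: (le_trans (vmin_le c i0)); apply: (vn_ge c i0).
have N0 : 0 <= N.
  rewrite /N /mx_norm_inf; apply: (big_ind (fun x => 0 <= x)) => //.
    by move=> x y hx hy; rewrite le_max hx.
  by move=> i _; apply: sumr_ge0 => j _.
have NMx : N * Mx < mu / 2.
  have h : N * Mx < mu / Mx / 2 * Mx by rewrite ltr_pM2r.
  by move: h; have -> : mu / Mx / 2 * Mx = mu / 2 by field; rewrite gt_eqF.
have Nhalf : N < 1/2.
  have h : mu / Mx <= 1 by rewrite ler_pdivrMr // mul1r.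
  lra.
have rowW : forall i, \sum_j `|W i j| <= N.
  by move=> i; rewrite /N /mx_norm_inf [X in _ <= X](bigD1 i) //= le_max lexx.
pose D : 'M[R]_n := diag_mx s^T.
have Dz : forall (z : 'cV[R]_n) i, (D *m z) i 0 = s i 0 * z i 0.
  by move=> z i; rewrite /D mul_diag_mx !mxE.
have s1 : forall i, `|s i 0| = 1.
  by move=> i; case: (Hs i) => ->; rewrite ?normrN normr1.
pose M := W *m D.
have Mb : forall (z : 'cV[R]_n) i, `|(M *m z) i 0| <= N * vn z.
  move=> z i; rewrite /M -mulmxA mxE.
  apply: (le_trans (ler_norm_sum _ _ _)).
  apply: (le_trans (y := \sum_j `|W i j| * vn z)).
    apply: ler_sum => j _; rewrite Dz !normrM s1 mul1r.
    by apply: ler_wpM2l => //; apply: vn_ge.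
  by rewrite -mulr_suml; apply: ler_wpM2r => //; apply: vn_ge0.
have Minj : forall z : 'cV[R]_n, z = M *m z -> z = 0.
  move=> z hz; apply: vn_eq0.
  have h : vn z <= N * vn z.
    apply: vn_le; first by apply: mulr_ge0 => //; apply: vn_ge0.
    by move=> i; rewrite {1}hz; apply: Mb.
  have := vn_ge0 z; nra.
pose L : 'M[R]_n := 1%:M - M.
have Lu : L \in unitmx.
  rewrite -unitmx_tr -row_free_unit -kermx_eq0; apply/rowV0P => u /sub_kermxP hu.
  have h : L *m u^T = 0 by apply: trmx_inj; rewrite trmx_mul trmxK hu trmx0.
  have : u^T = 0.
    apply: Minj; apply/eqP; rewrite -subr_eq0 -{1}(mul1mx u^T) -mulmxBl.
    by apply/eqP.
  by move/(congr1 trmx); rewrite trmxK trmx0.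
pose y0 := invmx L *m (- c).
have y0eq : y0 = - c + M *m y0.
  have h : L *m y0 = - c by rewrite /y0 mulKVmx.
  by rewrite -h /L mulmxBl mul1mx subrK.
have y0pos : forall i, 0 < y0 i 0.
  pose Y := vn y0.
  have Y0 : 0 <= Y by apply: vn_ge0.
  have hY : Y <= Mx + N * Y.
    apply: vn_le; first by apply: addr_ge0; [lra| apply: mulr_ge0].
    move=> i; rewrite y0eq mxE.
    have -> : (- c) i 0 = - c i 0 by rewrite mxE.
    apply: (le_trans (ler_normD _ _)); rewrite normrN.
    by apply: lerD; [apply: (vn_ge c i) | apply: Mb].
  have h1 : N * Y <= N * Mx + N * (N * Y).
    by rewrite -mulrDr; apply: ler_wpM2l.
  have h2 : N * (N * Y) <= 1/2 * (N * Y).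
    by apply: ler_wpM2r; [apply: mulr_ge0 | lra].
  have NY : N * Y < mu by lra.
  move=> i; rewrite y0eq mxE.
  have -> : (- c) i 0 = - c i 0 by rewrite mxE.
  have hc : - c i 0 = `|c i 0| by rewrite ltr0_norm.
  have hm : mu <= `|c i 0| by apply: vmin_le.
  have hM : `|(M *m y0) i 0| <= N * Y by apply: Mb.
  have := ler_norm (- (M *m y0) i 0); rewrite normrN.
  lra.
have BBp : B *m Bp = 1%:M.
  have rfB : row_free B by rewrite /row_free rkB.
  by apply: (row_free_inj rfB); rewrite /= MP1 mul1mx.
pose K := B - A *m D.
have Ky0 : K *m y0 = - b.
  rewrite /K mulmxBl {1}y0eq mulmxDr mulmxN /c /M /W !mulmxA BBp !mul1mx.
  by rewrite addrK.
have [v Kv v0] : exists2 v : 'cV[R]_n, K *m v = 0 & v != 0.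
  have kn0 : kermx K^T != 0.
    rewrite -mxrank_eq0 mxrank_ker mxrank_tr.
    have := rank_leq_row K; apply: contraTneq => h; lia.
  case/rowV0Pn: kn0 => u /sub_kermxP hu u0; exists u^T.
    by apply: trmx_inj; rewrite trmx_mul trmxK hu trmx0.
  by apply: contraNneq u0 => h; rewrite -(trmxK u) h trmx0.
pose vv := vn v.
have vv0 : 0 < vv.
  rewrite lt_neqAle vn_ge0 andbT; apply: contraNneq v0 => h.
  by apply/eqP; apply: vn_eq0.
pose ym := vmin_abs y0.
have ym0 : 0 < ym by apply: (vmin_gt0 i0) => i; rewrite gtr0_norm.
have ymle : forall i, ym <= y0 i 0 by move=> i; rewrite -(gtr0_norm (y0pos i)); apply: vmin_le.
pose t (k : nat) := ym / (vv * (k.+2)%:R).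
pose y (k : nat) := y0 + t k *: v.
pose f (k : nat) := D *m y k.
have t0 : forall k, 0 < t k.
  by move=> k; apply: divr_gt0 => //; apply: mulr_gt0.
have ypos : forall k i, 0 < y k i 0.
  move=> k i; have -> : y k i 0 = y0 i 0 + t k * v i 0 by rewrite /y !mxE.
  have htv : t k * vv < ym.
    have -> : t k * vv = ym / (k.+2)%:R.
      rewrite /t; field; rewrite (gt_eqF vv0) andbT -(natrD R 2 k) pnatr_eq0 //.
    rewrite ltr_pdivrMr // ?ltr0n // -{1}(mulr1 ym) ltr_pM2l // ltr1n //.
  have hv : `|t k * v i 0| <= t k * vv.
    by rewrite normrM gtr0_norm // ler_wpM2l ?(ltW (t0 k)) //; apply: vn_ge.
  have := ler_norm (- (t k * v i 0)); rewrite normrN.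
  have := ymle i.
  lra.
have fS : forall k, S (f k).
  move=> k; split.
    have -> : mx_abs (f k) = y k.
      apply/matrixP => i j; rewrite (ord1 j) /mx_abs mxE Dz normrM s1 mul1r.
      by rewrite gtr0_norm.
    have Ky : K *m y k = - b by rewrite /y mulmxDr -scalemxAr Kv scaler0 addr0.
    move: Ky; rewrite /K /f mulmxBl mulmxA => Ky.
    by rewrite -opprB Ky opprK.
  move=> i; rewrite /f Dz sgrM (gtr0_sg (ypos k i)) mulr1.
  by case: (Hs i) => ->; rewrite ?sgrN1 ?sgr1.
have finj : injective f.
  move=> k l hkl.
  have hy : y k = y l.
    apply/matrixP => i j; rewrite (ord1 j).
    have := congr1 (fun z : 'cV[R]_n => z i 0) hkl; rewrite /= /f !Dz.
    apply: mulfI; rewrite -normr_eq0 s1; exact: oner_neq0.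
  have htt : t k = t l.
    move: hy; rewrite /y => /addrI /eqP; rewrite -subr_eq0 -scalerBl scalemx_eq0.
    by rewrite (negbTE v0) orbF subr_eq0 => /eqP.
  move: htt; rewrite /t => /mulfI => /(_ (lt0r_neq0 ym0)) /invr_inj /mulfI.
  move=> /(_ (lt0r_neq0 vv0)) /eqP; rewrite eqr_nat => /eqP [].
  done.
move=> fin.
have : finite_set (f @^-1` S).
  by apply: finite_preimage => // k l _ _; apply: finj.
suff -> : f @^-1` S = setT by apply: infinite_nat.
by apply/seteqP; split=> // k _; apply: fS.
Qed.
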